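(* Let $t$ be a positive integer and $i\in\{1,\ldots,t\}$. Then there exist a positive integer $k$ and matrices $A,M,N,B\in\mathbb{Z}^{k\times k}_{\rm uptr}$ such that \[AM^{a_1}NM^{a_2}N\cdots NM^{a_t}B=a_iE_k\] for all nonnegative integers $a_1,\ldots,a_t$ (the product contains $t-1$ factors $N$).
   Context: $\mathbb{Z}^{k\times k}_{\rm uptr}$ is the set of upper-triangular $k\times k$ integer matrices. $E_k$ denotes the $k\times k$ matrix whose only nonzero entry is the entry in row $1$, column $k$, equal to $1$. *)

(* Defs.v *)
From mathcomp Require Import all_boot all_order all_algebra.
Set Implicit Arguments. Unset Strict Implicit. Unset Printing Implicit Defensive.
Import GRing.Theory.
Local Open Scope ring_scope.

Definition upper_tri (n : nat) (A : 'M[int]_n) : Prop :=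
  forall i j : 'I_n, (j < i)%N -> A i j = 0.

(* E_k : the k x k matrix with a single 1 in row 1, column k (k = n.+1). *)
Definition Ek (n : nat) : 'M[int]_n.+1 := delta_mx ord0 ord_max.

(* The word M^{a_1} N M^{a_2} N ... N M^{a_t}, as an ordered product
   over j < t of (N if j > 0, else 1) * M^{a_j}. *)
Definition word (n t : nat) (M N : 'M[int]_n.+1) (a : 'I_t -> nat) : 'M[int]_n.+1 :=
  \prod_(j < t) ((if j == 0%N :> nat then 1 else N) * M ^+ a j).

(* Main.v *)
Require Import Defs.
From mathcomp Require Import all_boot all_order all_algebra zify.
Local Open Scope ring_scope.
Import GRing.Theory.

Lemma mE n (X Y : 'M[int]_n.+1) : X * Y = X *m Y.
Proof. by rewrite mulmxE. Qed.

Definition uu (n c : nat) : 'rV[int]_n.+1 := delta_mx 0 (inord c).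

Definition MM (n T i : nat) : 'M[int]_n.+1 :=
  \matrix_(r, c) ((((r : nat) == c) : nat)%:R + ((((r : nat) == i) && ((c : nat) == T + i)%N) : nat)%:R).

Definition NN (n T : nat) : 'M[int]_n.+1 :=
  \matrix_(r, c) (((((c : nat) == r.+1) && (r.+1 != T)%N) : nat)%:R).

Lemma uu_mul n c (X : 'M[int]_n.+1) j : (uu n c *m X) 0 j = X (inord c) j.
Proof. by rewrite /uu -rowE mxE. Qed.

Lemma uuE n c j : (c < n.+1)%N -> uu n c 0 j = (((j : nat) == c) : nat)%:R.
Proof. by move=> hc; rewrite /uu mxE eqxx /= -(inj_eq val_inj) /= inordK // eq_sym. Qed.

Lemma uuM n T i c : (c < n.+1)%N -> (T + i < n.+1)%N ->
  uu n c *m MM n T i = uu n c + ((c == i)%N : nat)%:R *: uu n (T + i).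
Proof.
move=> hc hti; apply/rowP => j; rewrite uu_mul !mxE. idtac.
rewrite -!(inj_eq val_inj) /= !inordK // [(c == _)%N]eq_sym.
by case: (c == i); rewrite ?mul1r ?mul0r ?addr0.
Qed.

Lemma uuMX n T i c a : (c < n.+1)%N -> (T + i < n.+1)%N -> (T + i != i)%N ->
  uu n c *m (MM n T i ^+ a) = uu n c + (((c == i)%N : nat) * a)%:R *: uu n (T + i).
Proof.
move=> hc hti hne; elim: a => [|a IH].
  by rewrite expr0 mulmx1 muln0 scale0r addr0.
rewrite exprSr mE mulmxA IH mulmxDl -scalemxAl !uuM // (negbTE hne) /=.
by rewrite scale0r addr0 -addrA -scalerDl -natrD mulnS addnC.
Qed.

Lemma uuN n T c : (c.+1 < n.+1)%N ->
  uu n c *m NN n T = ((c.+1 != T)%N : nat)%:R *: uu n c.+1.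
Proof.
move=> hc; apply/rowP => j; rewrite uu_mul !mxE.
rewrite -!(inj_eq val_inj) /= !inordK //; last by apply: ltnW.
by case: (c.+1 != T)%N; rewrite ?mul1r ?mul0r ?andbT ?andbF.
Qed.

Lemma dl n (p q r c : 'I_n.+1) (X : 'M[int]_n.+1) :
  (delta_mx p q *m X) r c = ((r == p) : nat)%:R * X q c.
Proof.
rewrite mxE (bigD1 q) //= big1 ?addr0; first by rewrite mxE eqxx andbT.
by move=> k kq; rewrite mxE (negbTE kq) andbF mul0r.
Qed.

Lemma dr n (p q r c : 'I_n.+1) (X : 'M[int]_n.+1) :
  (X *m delta_mx p q) r c = X r p * ((c == q) : nat)%:R.
Proof.
rewrite mxE (bigD1 p) //= big1 ?addr0; first by rewrite mxE eqxx /=.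
by move=> k kq; rewrite mxE (negbTE kq) /= mulr0.
Qed.

Definition FF n T i (b : nat -> nat) (j : nat) : 'M[int]_n.+1 :=
  (if j == 0%N then 1 else NN n T) * MM n T i ^+ b j.

Lemma main t' i0 b : (i0 <= t')%N -> forall s, (s <= t')%N ->
  uu (t'.+1 + t') 0 *m \prod_(0 <= j < s.+1) FF (t'.+1 + t') t'.+1 i0 b j
  = uu _ s + (((i0 <= s)%N : nat) * b i0)%:R *: uu _ (t'.+1 + s).
Proof.
move=> hi; elim=> [|s IH] hs.
  rewrite big_nat_recr // big_geq // /FF /= !Monoid.simpm uuMX //; try lia.
  case: (posnP i0) => [->|ip]; first by rewrite addn0.
  have -> : (0 == i0)%N = false by lia.
  have -> : (i0 <= 0)%N = false by lia.
  by rewrite !mul0n !scale0r.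
rewrite big_nat_recr //= mE mulmxA IH; last by lia.
rewrite /FF /= mE mulmxA mulmxDl -scalemxAl !uuN; try lia.
have -> : (s.+1 != t'.+1)%N by lia.
have -> : ((t'.+1 + s).+1 != t'.+1)%N by lia.
rewrite !scale1r -(addnS t'.+1 s) mulmxDl -scalemxAl !uuMX; try lia.
have -> : ((t'.+1 + s.+1) == i0)%N = false by lia.
rewrite mul0n scale0r addr0 -addrA; congr (_ + _).
case: (eqVneq s.+1 i0) => [<-|hne].
  have -> : (s.+1 <= s)%N = false by lia.
  by rewrite mul0n scale0r addr0 leqnn mul1n addnS.
have -> : (i0 <= s.+1)%N = (i0 <= s)%N by lia.
by rewrite mul0n scale0r add0r addnS.
Qed.

Theorem lemma4p1 (t : nat) (i : 'I_t) :
  exists (n : nat) (A M N B : 'M[int]_n.+1),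
    [/\ upper_tri A, upper_tri M, upper_tri N, upper_tri B &
      forall a : 'I_t -> nat,
        A * word M N a * B = (a i)%:Z *: Ek n].
Proof.
case: t i => [|t'] i; first by case: i.
pose n := (t'.+1 + t')%N.
exists n, (delta_mx 0 0), (MM n t'.+1 i), (NN n t'.+1), (delta_mx ord_max ord_max).
split.
- move=> r c hcr; rewrite mxE -!(inj_eq val_inj) /=.
  by have -> : (r == 0 :> nat) = false by lia.
- move=> r c hcr; rewrite mxE.
  have -> : (r == c :> nat) = false by lia.
  have -> : ((r == i :> nat) && (c == t'.+1 + i :> nat)%N) = false.
    have := ltn_ord i; lia.
  by [].
- move=> r c hcr; rewrite mxE.
  by have -> : ((c == r.+1 :> nat) && (r.+1 != t'.+1)%N) = false by lia.
- move=> r c hcr; rewrite mxE -!(inj_eq val_inj) /=.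
  have hr := ltn_ord r; have -> : (c == n :> nat) = false by lia.
  by rewrite andbF.
move=> a.
have hw : word (MM n t'.+1 i) (NN n t'.+1) a =
  \prod_(0 <= j < t'.+1) FF n t'.+1 i (fun j => a (inord j)) j.
  rewrite big_mkord /word; apply: eq_bigr => j _; by rewrite /FF inord_val.
have hi : (i <= t')%N by have := ltn_ord i; lia.
have key := @main t' i (fun j => a (inord j)) hi t' (leqnn t').
rewrite -/n -hw in key.
have hW : word (MM n t'.+1 i) (NN n t'.+1) a 0 ord_max = (a i)%:Z.
  have e : (uu n 0 *m word (MM n t'.+1 i) (NN n t'.+1) a) 0 ord_max = (a i)%:Z.
    rewrite key !mxE -!(inj_eq val_inj) /= !inordK; try lia.
    have -> : (n == t')%N = false by lia.
    rewrite hi /= inord_val mul1n eqxx mulr1 add0r.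
    by rewrite natz.

  rewrite uu_mul in e.
  by have <- : inord 0 = (0 : 'I_n.+1) by apply: val_inj; rewrite /= inordK.
apply/matrixP => r c.
rewrite !mE dr dl hW /Ek !mxE.
case: (r == 0); case: (c == ord_max); by rewrite /= ?mul1r ?mulr1 ?mul0r ?mulr0.
Qed.
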